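(* Let $n\ge2$ and let $U^+$ be the subalgebra of $U_{r,s}(\mathfrak{so}_{2n+1})$ generated by $e_1,\dots,e_n$, with root vectors as in the context. Then in $U^+$: (1) $\mathcal E_{i,n}\mathcal E_{j,n}-rs\,\mathcal E_{j,n}\mathcal E_{i,n}=\mathcal E_{j,n-1}\mathcal E_{i,n'}-r^2\mathcal E_{i,n'}\mathcal E_{j,n-1}$ for $i<j<n$; (2) $\mathcal E_{j,k}\mathcal E_{i,(k+1)'}-r^2\mathcal E_{i,(k+1)'}\mathcal E_{j,k}=\mathcal E_{i,(k+2)'}\mathcal E_{j,k+1}-s^{-2}\mathcal E_{j,k+1}\mathcal E_{i,(k+2)'}$ for $i<j<k<n-1$; (3) $\mathcal E_{n-1,n}\mathcal E_{n-1,n'}=s^2\mathcal E_{n-1,n'}\mathcal E_{n-1,n}$; (4) $\mathcal E_{i,j'}e_n=(rs)^2e_n\mathcal E_{i,j'}$ for $i<j<n$; (5) $\mathcal E_{i,n'}\mathcal E_{n-1,n}=\mathcal E_{n-1,n}\mathcal E_{i,n'}$ for $i<n-1$; (6) $\mathcal E_{i,n'}\mathcal E_{n-1,n'}=s^2\mathcal E_{n-1,n'}\mathcal E_{i,n'}$ for $i<n-1$; (7) $\mathcal E_{i,(n-1)'}\mathcal E_{n-1,n}=s^2\mathcal E_{n-1,n}\mathcal E_{i,(n-1)'}$ for $i<n-1$; (8) $\mathcal E_{i,(n-1)'}\mathcal E_{n-1,n'}=(rs^2)^2\mathcal E_{n-1,n'}\mathcal E_{i,(n-1)'}$ for $i<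n-1$.
   Context: Let $r,s\in\mathbb C^*$ with $r^3\ne s^3$, $r^4\ne s^4$, $\mathbb K=\mathbb Q(r,s)$. $U_{r,s}(\mathfrak{so}_{2n+1})$ is the $\mathbb K$-algebra generated by $e_i,f_i,\omega_i^{\pm1},\omega_i'^{\pm1}$ ($1\le i\le n$) with: $\omega$'s commute, invertible; $\omega_je_i\omega_j^{-1}=\langle\omega_i',\omega_j\rangle e_i$, $\omega_jf_i\omega_j^{-1}=\langle\omega_i',\omega_j\rangle^{-1}f_i$, $\omega_j'e_i\omega_j'^{-1}=\langle\omega_j',\omega_i\rangle^{-1}e_i$, $\omega_j'f_i\omega_j'^{-1}=\langle\omega_j',\omega_i\rangle f_i$, where $\langle\omega_i',\omega_i\rangle=r^2s^{-2}$ ($i<n$), $\langle\omega_n',\omega_n\rangle=rs^{-1}$, $\langle\omega_i',\omega_{i+1}\rangle=r^{-2}$, $\langle\omega_{i+1}',\omega_i\rangle=s^2$ ($i<n$), others $1$; $e_if_j-f_je_i=\delta_{ij}(\omega_i-\omega_i')/(r_i-s_i)$ ($r_i=r^2,s_i=s^2$ for $i<n$; $r_n=r,s_n=s$); Serre relations $(\mathrm{ad}_le_i)^{1-a_{ij}}(e_j)=0=(\mathrm{ad}_rf_i)^{1-a_{ij}}(f_j)$, $i\ne j$, with $(a_{ij})$ the $B_n$ Cartan matrix ($a_{ii}=2$, $a_{i,i+1}=a_{i+1,i}=-1$ for $i\le n-2$, $a_{n-1,n}=-1$, $a_{n,n-1}=-2$, else $0$), $\mathrm{ad}_l(a)(b)=\sum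 a_{(1)}bS(a_{(2)})$, $\mathrm{ad}_r(a)(b)=\sum S(a_{(1)})ba_{(2)}$, for the Hopf structure $\Delta(\omega)=\omega\otimes\omega$, $\Delta(e_i)=e_i\otimes1+\omega_i\otimes e_i$, $\Delta(f_i)=1\otimes f_i+f_i\otimes\omega_i'$, $S(e_i)=-\omega_i^{-1}e_i$, $S(f_i)=-f_i\omega_i'^{-1}$. Root vectors: $\mathcal E_{i,i}=e_i$, $\mathcal E_{i,j}=e_i\mathcal E_{i+1,j}-r^2\mathcal E_{i+1,j}e_i$ ($1\le i<j\le n$), $\mathcal E_{i,n'}=\mathcal E_{i,n}e_n-rs\,e_n\mathcal E_{i,n}$ ($i\le n-1$), $\mathcal E_{i,j'}=\mathcal E_{i,(j+1)'}e_j-s^{-2}e_j\mathcal E_{i,(j+1)'}$ ($1\le i<j\le n-1$). *)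

(* Defs.v *)
From HB Require Import structures.
From mathcomp Require Import all_boot all_order all_algebra.
Set Implicit Arguments. Unset Strict Implicit. Unset Printing Implicit Defensive.
Import Order.TTheory GRing.Theory Num.Theory.
Local Open Scope ring_scope.

(* Two-parameter quantum group U_{r,s}(so_{2n+1}).  Indices are natural
   numbers 1..n; families of generators are functions nat -> A. *)

Section QG.
Variables (F : fieldType) (A : unitAlgType F) (n : nat) (r s : F).

(* <omega_i', omega_j> *)
Definition pairing (i j : nat) : F :=
  if i == j then (if (i < n)%N then r ^+ 2 / s ^+ 2 else r / s)
  else if (j == i.+1) && (i < n)%N then (r ^+ 2)^-1
  else if (i == j.+1) && (j < n)%N then s ^+ 2
  else 1.

Definition ri (i : nat) : F := if (i < n)%N then r ^+ 2 else r.
Definition si (i : nat) : F := if (i < n)%N then s ^+ 2 else s.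

(* 1 - a_ij for the B_n Cartan matrix, i <> j *)
Definition serre_exp (i j : nat) : nat :=
  if (i == n) && (j == n.-1) then 3
  else if (i == j.+1) || (j == i.+1) then 2
  else 1.

(* ad_l(e_i)(b) = e_i b S(1) + omega_i b S(e_i) *)
Definition adl (e w : nat -> A) (i : nat) (b : A) : A :=
  e i * b - w i * b * (w i)^-1 * e i.
(* ad_r(f_i)(b) = S(1) b f_i + S(f_i) b omega_i' *)
Definition adr (f w' : nat -> A) (i : nat) (b : A) : A :=
  b * f i - f i * (w' i)^-1 * b * w' i.

Definition Urs_relations (e f w w' : nat -> A) : Prop :=
  [/\ (forall i, (1 <= i <= n)%N -> w i \is a GRing.unit /\ w' i \is a GRing.unit),
      (forall i j, (1 <= i <= n)%N -> (1 <= j <= n)%N ->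
          [/\ w i * w j = w j * w i, w' i * w' j = w' j * w' i
            & w i * w' j = w' j * w i]),
      (forall i j, (1 <= i <= n)%N -> (1 <= j <= n)%N ->
          [/\ w j * e i * (w j)^-1 = pairing i j *: e i,
              w j * f i * (w j)^-1 = (pairing i j)^-1 *: f i,
              w' j * e i * (w' j)^-1 = (pairing j i)^-1 *: e i
            & w' j * f i * (w' j)^-1 = pairing j i *: f i]),
      (forall i j, (1 <= i <= n)%N -> (1 <= j <= n)%N ->
          e i * f j - f j * e i =
          if i == j then (ri i - si i)^-1 *: (w i - w' i) else 0)
    & (forall i j, (1 <= i <= n)%N -> (1 <= j <= n)%N -> i != j ->
          iter (serre_exp i j) (adl e w i) (e j) = 0 /\
          iter (serre_exp i j) (adr f w' i) (f j) = 0)].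

(* Root vectors.  Epos e i d = E_{i,i+d}. *)
Fixpoint Epos (e : nat -> A) (i d : nat) : A :=
  match d with
  | 0 => e i
  | d'.+1 => e i * Epos e i.+1 d' - r ^+ 2 *: (Epos e i.+1 d' * e i)
  end.
Definition Eroot (e : nat -> A) (i j : nat) : A := Epos e i (j - i).

(* Eprime_aux e i m = E_{i,(n-m)'} *)
Fixpoint Eprime_aux (e : nat -> A) (i m : nat) : A :=
  match m with
  | 0 => Eroot e i n * e n - (r * s) *: (e n * Eroot e i n)
  | m'.+1 => Eprime_aux e i m' * e (n - m'.+1)%N
             - (s ^+ 2)^-1 *: (e (n - m'.+1)%N * Eprime_aux e i m')
  end.
Definition Eprime (e : nat -> A) (i j : nat) : A := Eprime_aux e i (n - j).

End QG.

(* Main.v *)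
Require Import Defs.
From HB Require Import structures.
From mathcomp Require Import all_boot all_order all_algebra.
From mathcomp Require Import ring zify.
Import Order.TTheory GRing.Theory Num.Theory.
Set Implicit Arguments. Unset Strict Implicit. Unset Printing Implicit Defensive.
Local Open Scope ring_scope.

Section NC.
Variables (F : fieldType) (A : algType F).

Inductive nct : Type :=
 | NAt of nat | N0 | N1 | NAdd of nct & nct | NOpp of nct | NMul of nct & nct
 | NSc of F & nct.

Variable env : seq A.
Fixpoint ev (t : nct) : A := match t with
 | NAt k => nth 0 env k | N0 => 0 | N1 => 1
 | NAdd a b => ev a + ev b | NOpp a => - ev a | NMul a b => ev a * ev b
 | NSc c a => c *: ev a end.

Definition mono := (F * seq nat)%type.
Fixpoint wcat (w1 w2 : seq nat) := match w1 with [::] => w2 | x :: t => x :: wcat t w2 end.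
Fixpoint mapp (l1 l2 : seq mono) := match l1 with [::] => l2 | x :: t => x :: mapp t l2 end.
Fixpoint mscale (c : F) (l : seq mono) := match l with [::] => [::]
  | x :: t => (c * x.1, x.2) :: mscale c t end.
Fixpoint mmul1 (m : mono) (l : seq mono) := match l with [::] => [::]
  | x :: t => (m.1 * x.1, wcat m.2 x.2) :: mmul1 m t end.
Fixpoint mmul (l1 l2 : seq mono) := match l1 with [::] => [::]
  | x :: t => mapp (mmul1 x l2) (mmul t l2) end.
Fixpoint norm (t : nct) : seq mono := match t with
 | NAt k => [:: (1, [:: k])] | N0 => [::] | N1 => [:: (1, [::])]
 | NAdd a b => mapp (norm a) (norm b) | NOpp a => mscale (-1) (norm a)
 | NMul a b => mmul (norm a) (norm b) | NSc c a => mscale c (norm a) end.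

Fixpoint wev (w : seq nat) : A := match w with [::] => 1 | k :: t => nth 0 env k * wev t end.
Fixpoint nfev (l : seq mono) : A := match l with [::] => 0 | m :: t => m.1 *: wev m.2 + nfev t end.

Lemma wev_cat w1 w2 : wev (wcat w1 w2) = wev w1 * wev w2.
Proof. by elim: w1 => [|x t IH] /=; rewrite ?mul1r // IH mulrA. Qed.
Lemma nfev_app l1 l2 : nfev (mapp l1 l2) = nfev l1 + nfev l2.
Proof. by elim: l1 => [|x t IH] /=; rewrite ?add0r // IH addrA. Qed.
Lemma nfev_scale c l : nfev (mscale c l) = c *: nfev l.
Proof. by elim: l => [|x t IH] /=; rewrite ?scaler0 // IH scalerDr scalerA. Qed.
Lemma nfev_mul1 m l : nfev (mmul1 m l) = (m.1 *: wev m.2) * nfev l.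
Proof.
elim: l => [|x t IH] /=; first by rewrite mulr0.
by rewrite IH mulrDr wev_cat -scalerAr -!scalerAl scalerA [x.1 * _]mulrC.
Qed.
Lemma nfev_mul l1 l2 : nfev (mmul l1 l2) = nfev l1 * nfev l2.
Proof. by elim: l1 => [|x t IH] /=; rewrite ?mul0r // nfev_app nfev_mul1 IH mulrDl. Qed.
Lemma nfev_norm t : nfev (norm t) = ev t.
Proof.
elim: t => [k| | |a IHa b IHb|a IHa|a IHa b IHb|c a IHa] /=.
- by rewrite scale1r mulr1 addr0.
- by [].
- by rewrite scale1r addr0.
- by rewrite nfev_app IHa IHb.
- by rewrite nfev_scale IHa scaleN1r.
- by rewrite nfev_mul IHa IHb.
- by rewrite nfev_scale IHa.
Qed.

Fixpoint memp (cp : seq (nat * nat)) (x y : nat) : bool := match cp with [::] => false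
  | q :: t => ((Nat.eqb q.1 x && Nat.eqb q.2 y) || (Nat.eqb q.1 y && Nat.eqb q.2 x)) || memp t x y end.
Fixpoint ccheck (cp : seq (nat * nat)) : Prop := match cp with [::] => True
  | q :: t => nth 0 env q.1 * nth 0 env q.2 = nth 0 env q.2 * nth 0 env q.1 /\ ccheck t end.
Fixpoint passa cp (x : nat) (t : seq nat) : seq nat := match t with [::] => [:: x]
  | y :: t2 => if Nat.ltb y x && memp cp x y then y :: passa cp x t2 else x :: passa cp y t2 end.
Definition pass cp (w : seq nat) := match w with [::] => [::] | x :: t => passa cp x t end.
Fixpoint wsize (w : seq nat) : nat := match w with [::] => 0%N | _ :: t => S (wsize t) end.
Fixpoint itp cp (k : nat) (w : seq nat) := match k with 0%N => w | S k => itp cp k (pass cp w) end.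
Definition bsort cp w := itp cp (wsize w) w.
Fixpoint nmap cp (l : seq mono) := match l with [::] => [::] | m :: t => (m.1, bsort cp m.2) :: nmap cp t end.

Lemma memp_ok cp x y : ccheck cp -> memp cp x y ->
  nth 0 env x * nth 0 env y = nth 0 env y * nth 0 env x.
Proof.
elim: cp => [|[a b] t IH] //= [Hab Ht].
case/orP => [/orP [] /andP [/PeanoNat.Nat.eqb_eq <- /PeanoNat.Nat.eqb_eq <-] | /(IH Ht) //].
- exact: Hab.
- by rewrite Hab.
Qed.
Lemma passa_ok cp x t : ccheck cp -> wev (passa cp x t) = nth 0 env x * wev t.
Proof.
move=> Hc; elim: t x => [|y t IH] x /=; first by [].
case: ifP => [/andP [_ H]|_] /=; rewrite IH //.
by rewrite !mulrA (memp_ok Hc H).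
Qed.
Lemma bsort_ok cp w : ccheck cp -> wev (bsort cp w) = wev w.
Proof.
move=> Hc; rewrite /bsort; move: (wsize w) => k; elim: k w => [|k IH] w //=.
rewrite IH; case: w => [|x t] //=; exact: passa_ok.
Qed.
Lemma nmap_ok cp l : ccheck cp -> nfev (nmap cp l) = nfev l.
Proof. by move=> Hc; elim: l => [|m t IH] //=; rewrite IH bsort_ok. Qed.

Fixpoint weq (w1 w2 : seq nat) : bool := match w1, w2 with
  | [::], [::] => true | x :: t, y :: u => Nat.eqb x y && weq t u | _, _ => false end.
Lemma weqP w1 w2 : weq w1 w2 -> w1 = w2.
Proof.
elim: w1 w2 => [|x t IH] [|y u] //= /andP [/PeanoNat.Nat.eqb_eq -> /IH ->] //.
Qed.
Fixpoint csum w (l : seq mono) : F := match l with [::] => 0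
  | m :: t => if weq m.2 w then m.1 + csum w t else csum w t end.
Fixpoint crest w (l : seq mono) := match l with [::] => [::]
  | m :: t => if weq m.2 w then crest w t else m :: crest w t end.
Lemma csum_ok w l : nfev l = csum w l *: wev w + nfev (crest w l).
Proof.
elim: l => [|m t IH] /=; first by rewrite scale0r addr0.
case: ifP => [/weqP ->|_] /=; rewrite IH; last by rewrite addrCA.
by rewrite scalerDl addrA.
Qed.
Fixpoint msize (l : seq mono) : nat := match l with [::] => 0%N | _ :: t => S (msize t) end.
Fixpoint zchk (fuel : nat) (l : seq mono) : Prop := match l with [::] => True
  | m :: t => match fuel with 0%N => False
     | S f => m.1 + csum m.2 t = 0 /\ zchk f (crest m.2 t) end end.
Lemma zchk_ok f l : zchk f l -> nfev l = 0.
Proof.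
elim: f l => [|f IH] [|m t] //= [H1 H2].
by rewrite (csum_ok m.2 t) addrA -scalerDl H1 scale0r add0r IH.
Qed.

Lemma nc_ok cp t1 t2 : ccheck cp ->
  let l := nmap cp (norm (NAdd t1 (NOpp t2))) in zchk (msize l) l -> ev t1 = ev t2.
Proof.
move=> Hc l /zchk_ok; rewrite /l nmap_ok // nfev_norm /= => /eqP.
by rewrite subr_eq0 => /eqP.
Qed.
End NC.

Ltac nc_mem x l := lazymatch l with
 | nil => constr:(false) | cons x _ => constr:(true) | cons _ ?t => nc_mem x t end.
Ltac nc_atoms t l := lazymatch t with
 | @GRing.add _ ?a ?b => let l := nc_atoms a l in nc_atoms b l
 | @GRing.opp _ ?a => nc_atoms a l
 | @GRing.mul _ ?a ?b => let l := nc_atoms a l in nc_atoms b l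
 | @GRing.scale _ _ _ ?a => nc_atoms a l
 | @GRing.zero _ => l | @GRing.one _ => l
 | _ => let b := nc_mem t l in lazymatch b with true => l | false => constr:(cons t l) end end.
Ltac nc_idx x l := lazymatch l with
 | cons x _ => constr:(0%N) | cons _ ?t => let k := nc_idx x t in constr:(S k) end.
Ltac nc_reify F t l := lazymatch t with
 | @GRing.add _ ?a ?b => let x := nc_reify F a l in let y := nc_reify F b l in constr:(@NAdd F x y)
 | @GRing.opp _ ?a => let x := nc_reify F a l in constr:(@NOpp F x)
 | @GRing.mul _ ?a ?b => let x := nc_reify F a l in let y := nc_reify F b l in constr:(@NMul F x y)
 | @GRing.scale _ _ ?c ?a => let x := nc_reify F a l in constr:(@NSc F c x)
 | @GRing.zero _ => constr:(@N0 F) | @GRing.one _ => constr:(@N1 F)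
 | _ => let k := nc_idx t l in constr:(@NAt F k) end.
Ltac nc_pairs ps l := lazymatch ps with
 | nil => constr:(@nil (nat * nat))
 | cons (?x, ?y) ?t => let i := nc_idx x l in let j := nc_idx y l in
     let t' := nc_pairs t l in constr:(cons (i, j) t') end.

Ltac nc_coefs := cbv [zchk csum crest weq nmap norm mapp mscale mmul mmul1 wcat bsort itp pass passa
   memp wsize msize Nat.eqb Nat.ltb Nat.leb andb orb negb fst snd];
   repeat split.

Ltac nc_gen F ps := lazymatch goal with |- ?L = ?R =>
  let T := type of L in
  let l0 := nc_atoms L (@nil T) in let l := nc_atoms R l0 in
  let tl := nc_reify F L l in let tr := nc_reify F R l in
  let cp := nc_pairs ps l in
  apply: (@nc_ok F _ l cp tl tr); [cbv [ccheck nth fst snd]; repeat split; 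
     try (by []); try (by symmetry) | nc_coefs] end.

Definition br (F : fieldType) (A : algType F) (q : F) (x y : A) : A := x * y - q *: (y * x).

Lemma certL (F : fieldType) (A : algType F) (c : F) (G C : A) : c != 0 -> c *: G = C -> C = 0 -> G = 0.
Proof. by move=> hc <- /eqP; rewrite scaler_eq0 (negbTE hc) /= => /eqP. Qed.

Lemma br0l (F : fieldType) (A : algType F) q (y : A) : br q 0 y = 0.
Proof. by rewrite /br mul0r mulr0 scaler0 subr0. Qed.
Lemma br0r (F : fieldType) (A : algType F) q (y : A) : br q y 0 = 0.
Proof. by rewrite /br mul0r mulr0 scaler0 subr0. Qed.
Lemma br_eq (F : fieldType) (A : algType F) q (x y : A) : br q x y = 0 -> x * y = q *: (y * x).
Proof. by move/eqP; rewrite subr_eq0 => /eqP. Qed.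

Ltac zsimp := rewrite ?(br0l, br0r, mulr0, mul0r, scaler0, addr0, add0r, subr0, sub0r, oppr0).

Section Main.
Variables (F : fieldType) (A : unitAlgType F) (n : nat) (r s : F) (e f w w' : nat -> A).
Hypotheses (hr : r != 0) (hs : s != 0) (h3 : r ^+ 3 != s ^+ 3) (h4 : r ^+ 4 != s ^+ 4)
  (hn : (2 <= n)%N) (HU : Urs_relations n r s e f w w').

Ltac ncl := solve [ring | field; by rewrite ?(expf_neq0, mulf_neq0, hr, hs)].
Ltac nc ps := rewrite /br; nc_gen F ps; try done; ncl.

Lemma KS : r ^+ 2 + r * s + s ^+ 2 != 0.
Proof.
apply: contra h3 => /eqP H; rewrite -subr_eq0.
have -> : r ^+ 3 - s ^+ 3 = (r - s) * (r ^+ 2 + r * s + s ^+ 2) by ring.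
by rewrite H mulr0.
Qed.
Lemma S2 : r ^+ 2 + s ^+ 2 != 0.
Proof.
apply: contra h4 => /eqP H; rewrite -subr_eq0.
have -> : r ^+ 4 - s ^+ 4 = (r ^+ 2 - s ^+ 2) * (r ^+ 2 + s ^+ 2) by ring.
by rewrite H mulr0.
Qed.

Lemma br_qc (x y z : A) al be q : br al x z = 0 -> br be y z = 0 ->
  br (al * be) (br q x y) z = 0.
Proof.
move=> H1 H2; apply: (@certL _ _ 1 _
  (x * br be y z + be *: (br al x z * y) - q *: (y * br al x z + al *: (br be y z * x)))).
- exact: oner_neq0.
- nc (@nil (A * A)).
- by rewrite H1 H2; zsimp.
Qed.
Lemma br_qcl (x y z : A) al be q : br al z x = 0 -> br be z y = 0 ->
  br (al * be) z (br q x y) = 0.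
Proof.
move=> H1 H2; apply: (@certL _ _ 1 _
  (br al z x * y + al *: (x * br be z y) - q *: (br be z y * x + be *: (y * br al z x)))).
- exact: oner_neq0.
- nc (@nil (A * A)).
- by rewrite H1 H2; zsimp.
Qed.
Lemma comm_br (x y z : A) q : x * z = z * x -> y * z = z * y -> br q x y * z = z * br q x y.
Proof.
move=> H1 H2; apply/eqP; rewrite -subr_eq0; apply/eqP.
have := (@br_qc x y z 1 1 q); rewrite /br !scale1r mulr1 scale1r; apply.
  by rewrite H1 subrr.
by rewrite H2 subrr.
Qed.
Lemma br_assoc (a b c : A) p q : a * c = c * a -> br p (br q a b) c = br q a (br p b c).
Proof. move=> H; nc [:: (a, c)]. Qed.

Definition cj k (x : A) := w k * x * (w k)^-1.
Lemma wunit k : (1 <= k <= n)%N -> w k \is a GRing.unit.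
Proof. by case: HU => H1 _ _ _ _ /H1 []. Qed.
Lemma cjM k x y : (1 <= k <= n)%N -> cj k (x * y) = cj k x * cj k y.
Proof. by move=> /wunit U; rewrite /cj !mulrA (mulrVK U). Qed.
Lemma cj_br k x y cx cy q : (1 <= k <= n)%N -> cj k x = cx *: x -> cj k y = cy *: y ->
  cj k (br q x y) = (cx * cy) *: br q x y.
Proof.
move=> K Hx Hy; rewrite /br /cj mulrBr mulrBl -scalerAr -scalerAl -!/(cj k _) !cjM // Hx Hy.
rewrite -!scalerAl -!scalerAr !scalerA scalerBr scalerA; congr (_ - _ *: _); ring.
Qed.
Lemma conj_e i j : (1 <= i <= n)%N -> (1 <= j <= n)%N -> cj j (e i) = pairing n r s i j *: e i.
Proof. by case: HU => _ _ H3 _ _ Hi Hj; case: (H3 i j Hi Hj). Qed.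
Lemma adl_step k x c : cj k x = c *: x -> adl e w k x = br c (e k) x.
Proof. by rewrite /adl /br /cj => ->; rewrite -scalerAl. Qed.

Lemma pair_sub i : (i < n)%N -> pairing n r s i.+1 i = s ^+ 2.
Proof. move=> H; rewrite /pairing; do ! case: ifP; move=> *; try done; lia. Qed.
Lemma pair_sup i : (i < n)%N -> pairing n r s i i.+1 = (r ^+ 2)^-1.
Proof. move=> H; rewrite /pairing; do ! case: ifP; move=> *; try done; lia. Qed.
Lemma pair_diag i : (i < n)%N -> pairing n r s i i = r ^+ 2 / s ^+ 2.
Proof. move=> H; rewrite /pairing; do ! case: ifP; move=> *; try done; lia. Qed.
Lemma pair_n : pairing n r s n n = r / s.
Proof. rewrite /pairing; do ! case: ifP; move=> *; try done; lia. Qed.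
Lemma pair_far i j : (i.+1 < j)%N || (j.+1 < i)%N -> pairing n r s i j = 1.
Proof. move=> H; rewrite /pairing; do ! case: ifP; move=> *; try done; lia. Qed.

Lemma serre_gen i j : (1 <= i <= n)%N -> (1 <= j <= n)%N -> i != j ->
  iter (serre_exp n i j) (adl e w i) (e j) = 0.
Proof. by case: HU => _ _ _ _ H5 Hi Hj Hij; case: (H5 i j Hi Hj Hij). Qed.

Lemma commE k l : (1 <= k <= n)%N -> (1 <= l <= n)%N -> (k.+1 < l)%N || (l.+1 < k)%N ->
  e k * e l = e l * e k.
Proof.
move=> Hk Hl Hf.
have Hne : k != l by apply/eqP; lia.
have := serre_gen Hk Hl Hne.
have -> : serre_exp n k l = 1%N by rewrite /serre_exp; do ! case: ifP; move=> *; try done; lia.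
rewrite /= (adl_step (conj_e Hl Hk)) pair_far; last by lia.
by move/br_eq; rewrite scale1r.
Qed.

Lemma SR1 i : (1 <= i)%N -> (i < n)%N -> br (s ^+ 2) (e i) (br (r ^+ 2) (e i) (e i.+1)) = 0.
Proof.
move=> H1 H2.
have Hi : (1 <= i <= n)%N by lia.
have Hj : (1 <= i.+1 <= n)%N by lia.
have Hne : i != i.+1 by apply/eqP; lia.
have := serre_gen Hi Hj Hne.
have -> : serre_exp n i i.+1 = 2%N by rewrite /serre_exp; do ! case: ifP; move=> *; try done; lia.
rewrite /= (adl_step (conj_e Hj Hi)) (adl_step (cj_br _ Hi (conj_e Hi Hi) (conj_e Hj Hi))).
rewrite pair_sub // pair_diag // => H.
apply: (@certL _ _ 1 _ _ (oner_neq0 _) _ H); nc (@nil (A * A)).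
Qed.

Lemma SR2 i : (1 <= i)%N -> (i.+1 < n)%N -> br (s ^+ 2) (br (r ^+ 2) (e i) (e i.+1)) (e i.+1) = 0.
Proof.
move=> H1 H2.
have Hi : (1 <= i <= n)%N by lia.
have Hj : (1 <= i.+1 <= n)%N by lia.
have Hne : i.+1 != i by apply/eqP; lia.
have := serre_gen Hj Hi Hne.
have -> : serre_exp n i.+1 i = 2%N by rewrite /serre_exp; do ! case: ifP; move=> *; try done; lia.
rewrite /= (adl_step (conj_e Hi Hj)) (adl_step (cj_br _ Hj (conj_e Hj Hj) (conj_e Hi Hj))).
rewrite pair_sup // pair_diag // => H.
have hc : (r ^+ 2 * s ^+ 2)^-1 != 0 by rewrite invr_eq0 mulf_neq0 // expf_neq0.
apply: (@certL _ _ _ _ _ hc _ H); nc (@nil (A * A)).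
Qed.

Lemma SR3 : br (s ^+ 2) (br (r * s) (br (r ^+ 2) (e n.-1) (e n)) (e n)) (e n) = 0.
Proof.
have Hi : (1 <= n.-1 <= n)%N by lia.
have Hj : (1 <= n <= n)%N by lia.
have Hne : n != n.-1 by apply/eqP; lia.
have := serre_gen Hj Hi Hne.
have -> : serre_exp n n n.-1 = 3%N by rewrite /serre_exp !eqxx.
have cn := conj_e Hj Hj.
rewrite /= (adl_step (conj_e Hi Hj)) (adl_step (cj_br _ Hj cn (conj_e Hi Hj))).
rewrite (adl_step (cj_br _ Hj cn (cj_br _ Hj cn (conj_e Hi Hj)))).
have ps : pairing n r s n.-1 n = (r ^+ 2)^-1.
  by rewrite /pairing; do ! case: ifP; move=> *; try done; lia.
rewrite ps pair_n => H.
have hc : - (r ^+ 3 * s ^+ 3)^-1 != 0 by rewrite oppr_eq0 invr_eq0 mulf_neq0 // expf_neq0.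
apply: (@certL _ _ _ _ _ hc _ H); nc (@nil (A * A)).
Qed.

Notation E := (Eroot r e).
Notation Ep := (Eprime n r s e).

Lemma Epos_comm x i d : (forall l, (i <= l <= i + d)%N -> e l * x = x * e l) ->
  Epos r e i d * x = x * Epos r e i d.
Proof.
elim: d i => [|d IH] i H /=; first by apply: H; rewrite addn0 leqnn.
rewrite -/(br (r ^+ 2) (e i) (Epos r e i.+1 d)); apply: comm_br.
  by apply: H; lia.
by apply: IH => l Hl; apply: H; lia.
Qed.

Lemma Epos_commE k i d : (1 <= k <= n)%N -> (1 <= i)%N -> (i + d <= n)%N ->
  (k.+1 < i)%N || ((i + d).+1 < k)%N -> Epos r e i d * e k = e k * Epos r e i d.
Proof. move=> Hk Hi Hd Hf; apply: Epos_comm => l Hl; apply: commE; lia. Qed.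

Lemma Epos_split i a b : (1 <= i)%N -> (i + a + b < n)%N ->
  Epos r e i (a + b).+1 = br (r ^+ 2) (Epos r e i a) (Epos r e (i + a).+1 b).
Proof.
elim: a i => [|a IH] i Hi Hn; first by rewrite add0n addn0.
rewrite addSn /= -/(br (r ^+ 2) (e i) (Epos r e i.+1 (a + b).+1)) IH; [|lia|lia].
rewrite -br_assoc; last first.
  apply/esym/Epos_commE; lia.
by rewrite addSnnS.
Qed.

Lemma ER_diag i : E i i = e i.
Proof. by rewrite /Eroot subnn. Qed.
Lemma ER_S i j : (i < j)%N -> E i j = br (r ^+ 2) (e i) (E i.+1 j).
Proof. by move=> H; rewrite /Eroot -(subnSK H). Qed.
Lemma ER_split i k m : (1 <= i <= k)%N -> (k < m <= n)%N ->
  E i m = br (r ^+ 2) (E i k) (E k.+1 m).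
Proof.
move=> H1 H2; rewrite /Eroot.
have -> : (m - i = ((k - i) + (m - k.+1)).+1)%N by lia.
rewrite Epos_split; [|lia|lia].
by have -> : (i + (k - i)).+1 = k.+1 by lia.
Qed.
Lemma ER_right i m : (1 <= i < m)%N -> (m <= n)%N -> E i m = br (r ^+ 2) (E i m.-1) (e m).
Proof.
move=> H1 H2; rewrite (@ER_split i m.-1 m); [|lia|lia].
by rewrite prednK ?ER_diag //; lia.
Qed.
Lemma E_commE k i j : (1 <= k <= n)%N -> (1 <= i <= j)%N -> (j <= n)%N ->
  (k.+1 < i)%N || (j.+1 < k)%N -> E i j * e k = e k * E i j.
Proof. move=> Hk Hij Hj Hf; rewrite /Eroot; apply: Epos_commE; lia. Qed.

Lemma brc1 (x y : A) : x * y = y * x -> br 1 x y = 0.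
Proof. by rewrite /br scale1r => ->; rewrite subrr. Qed.

Lemma T4 i m : (1 <= i < m)%N -> (m < n)%N -> br (s ^+ 2) (E i m) (e m) = 0.
Proof.
move=> H1 H2; have [d Hd] : exists d, m = (i + d).+1 by exists (m - i).-1; lia.
elim: d i H1 Hd => [|d IH] i H1 Hd.
  rewrite Hd addn0 (ER_S (ltnSn i)) ER_diag; apply: SR2; lia.
rewrite (@ER_S i m); last by lia.
rewrite -(mul1r (s ^+ 2)); apply: br_qc; last by apply: IH; lia.
apply: brc1; apply: commE; lia.
Qed.

Lemma T4L i m : (1 <= i < m)%N -> (m <= n)%N -> br (s ^+ 2) (e i) (E i m) = 0.
Proof.
move=> H1; elim: m H1 => [|m IH] H1 H2; first by lia.
case: (ltngtP i m) => Him.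
- rewrite (@ER_right i m.+1) /=; [|lia|lia].
  rewrite -(mulr1 (s ^+ 2)); apply: br_qcl; first by apply: IH; lia.
  apply: brc1; apply: commE; lia.
- lia.
- rewrite Him (ER_S (ltnSn m)) ER_diag; apply: SR1; lia.
Qed.

Lemma R1 i k m : (1 <= i <= k)%N -> (k < m <= n)%N -> br (s ^+ 2) (E i k) (E i m) = 0.
Proof.
move=> H1 H2; have [d Hd] : exists d, k = (i + d)%N by exists (k - i)%N; lia.
elim: d i H1 Hd => [|d IH] i H1 Hd.
  rewrite Hd addn0 ER_diag; apply: T4L; lia.
have H0 : br (s ^+ 2) (E i.+1 k) (E i.+1 m) = 0 by apply: IH; lia.
have hP : br (s ^+ 2) (e i) (E i k) = 0 by apply: T4L; lia.
have hM : br (s ^+ 2) (e i) (E i m) = 0 by apply: T4L; lia.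
rewrite (@ER_S i k) in hP *; last by lia.
rewrite (@ER_S i m) in hM *; last by lia.
move: H0 hP hM; set x := e i; set P1 := E i.+1 k; set Q1 := E i.+1 m => H0 hP hM.
apply: (@certL _ _ (r ^+ 2 + s ^+ 2) _
  (br (r ^+ 2 * s ^+ 2) x (br (r ^+ 4) x (br (s ^+ 2) P1 Q1))
   - (br (s ^+ 2) x (br (r ^+ 2) x P1) * Q1 + r ^+ 4 *: (P1 * br (s ^+ 2) x (br (r ^+ 2) x Q1))
      - s ^+ 2 *: (br (s ^+ 2) x (br (r ^+ 2) x Q1) * P1)
      - (s ^+ 2 * r ^+ 4) *: (Q1 * br (s ^+ 2) x (br (r ^+ 2) x P1)))) S2).
  nc (@nil (A * A)).
by rewrite H0 hP hM; zsimp.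
Qed.

Lemma R2 i j m : (1 <= i < j)%N -> (j <= m)%N -> (m < n)%N -> br (s ^+ 2) (E i m) (E j m) = 0.
Proof.
move=> H1 H2 H3; have [d Hd] : exists d, m = (j + d)%N by exists (m - j)%N; lia.
elim: d m H2 H3 Hd => [|d IH] m H2 H3 Hd.
  rewrite Hd addn0 ER_diag; apply: T4; lia.
have H0 : br (s ^+ 2) (E i m.-1) (E j m.-1) = 0 by apply: IH; lia.
have hP : br (s ^+ 2) (E i m) (e m) = 0 by apply: T4; lia.
have hQ : br (s ^+ 2) (E j m) (e m) = 0 by apply: T4; lia.
rewrite (@ER_right i m) in hP *; [|lia|lia].
rewrite (@ER_right j m) in hQ *; [|lia|lia].
move: H0 hP hQ; set c := e m; set P := E i m.-1; set Q := E j m.-1 => H0 hP hQ.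
apply: (@certL _ _ (r ^+ 2 + s ^+ 2) _
  (br (r ^+ 2 * s ^+ 2) (br (r ^+ 4) (br (s ^+ 2) P Q) c) c
   - (P * br (s ^+ 2) (br (r ^+ 2) Q c) c + r ^+ 4 *: (br (s ^+ 2) (br (r ^+ 2) P c) c * Q)
      - s ^+ 2 *: (Q * br (s ^+ 2) (br (r ^+ 2) P c) c)
      - (s ^+ 2 * r ^+ 4) *: (br (s ^+ 2) (br (r ^+ 2) Q c) c * P))) S2).
  nc (@nil (A * A)).
by rewrite H0 hP hQ; zsimp.
Qed.

Lemma Eu : E n.-1 n = br (r ^+ 2) (e n.-1) (e n).
Proof. rewrite ER_S; last by lia. by rewrite prednK ?ER_diag //; lia. Qed.

Lemma SR1n : br (s ^+ 2) (e n.-1) (br (r ^+ 2) (e n.-1) (e n)) = 0.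
Proof. have := @SR1 n.-1; rewrite prednK; last by lia. apply; lia. Qed.

Lemma R4 i : (1 <= i < n)%N -> br (s ^+ 2) (br (r * s) (E i n) (e n)) (e n) = 0.
Proof.
move=> H; case: (ltngtP i n.-1) => Hi; last first.
- by rewrite Hi Eu; apply: SR3.
- lia.
rewrite (@ER_right i n); [|lia|lia].
rewrite (@ER_right i n.-1); [|lia|lia].
have hX : E i n.-1.-1 * e n = e n * E i n.-1.-1 by apply: E_commE; lia.
apply: (@certL _ _ 1 _ (br (r ^+ 2) (E i n.-1.-1)
   (br (s ^+ 2) (br (r * s) (br (r ^+ 2) (e n.-1) (e n)) (e n)) (e n))) (oner_neq0 _)).
  nc [:: (E i n.-1.-1, e n)].
by rewrite SR3; zsimp.
Qed.

Lemma L3 : br (s ^+ 2) (E n.-1 n) (br (r * s) (E n.-1 n) (e n)) = 0.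
Proof.
rewrite Eu.
have hc : r * s != 0 by rewrite mulf_neq0.
apply: (@certL _ _ (r * s) _
  (br (r ^+ 2 * s ^+ 2) (br (r ^+ 3 * s) (br (s ^+ 2) (e n.-1) (br (r ^+ 2) (e n.-1) (e n))) (e n)) (e n)
   - e n.-1 * br (s ^+ 2) (br (r * s) (br (r ^+ 2) (e n.-1) (e n)) (e n)) (e n)
   + (r ^+ 4 * s ^+ 2) *: (br (s ^+ 2) (br (r * s) (br (r ^+ 2) (e n.-1) (e n)) (e n)) (e n) * e n.-1)) hc).
  nc (@nil (A * A)).
by rewrite SR1n SR3; zsimp.
Qed.

Lemma C3 i : (1 <= i)%N -> (i.+2 <= n)%N -> E i i.+2 * e i.+1 = e i.+1 * E i i.+2.
Proof.
move=> H1 H2.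
rewrite (@ER_right i i.+2) /=; [|lia|lia].
rewrite (@ER_S i i.+1) ?ER_diag; last by lia.
have hL : br (s ^+ 2) (e i.+1) (br (r ^+ 2) (e i.+1) (e i.+2)) = 0 by apply: SR1; lia.
have hR : br (s ^+ 2) (br (r ^+ 2) (e i) (e i.+1)) (e i.+1) = 0 by apply: SR2; lia.
have hac : e i * e i.+2 = e i.+2 * e i by apply: commE; lia.
suff : br 1 (e i.+1) (br (r ^+ 2) (br (r ^+ 2) (e i) (e i.+1)) (e i.+2)) = 0.
  by move/br_eq; rewrite scale1r.
apply: (@certL _ _ (r ^+ 2 + s ^+ 2) _
  (e i * br (s ^+ 2) (e i.+1) (br (r ^+ 2) (e i.+1) (e i.+2))
   - r ^+ 4 *: (br (s ^+ 2) (e i.+1) (br (r ^+ 2) (e i.+1) (e i.+2)) * e i)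
   - br (s ^+ 2) (br (r ^+ 2) (e i) (e i.+1)) (e i.+1) * e i.+2
   + r ^+ 4 *: (e i.+2 * br (s ^+ 2) (br (r ^+ 2) (e i) (e i.+1)) (e i.+1))) S2).
  nc [:: (e i, e i.+2)].
by rewrite hL hR; zsimp.
Qed.

Lemma T5 i l m : (1 <= i < l)%N -> (l < m <= n)%N -> E i m * e l = e l * E i m.
Proof.
move=> H1 H2; have [d Hd] : exists d, l = (i + d).+1 by exists (l - i).-1; lia.
elim: d i H1 Hd => [|d IH] i H1 Hd.
  rewrite addn0 in Hd; subst l.
  have [k Hk] : exists k, m = (i.+2 + k)%N by exists (m - i.+2)%N; lia.
  elim: k m H2 Hk => [|k IHk] m H2 Hk.
    by rewrite Hk addn0; apply: C3; lia.
  rewrite (@ER_right i m); [|lia|lia].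
  apply: comm_br; first by apply: IHk; lia.
  apply: commE; lia.
rewrite (@ER_S i m); last by lia.
apply: comm_br; last by apply: IH; lia.
apply: commE; lia.
Qed.

Lemma EA0 i : Eprime_aux n r s e i 0 = br (r * s) (E i n) (e n).
Proof. by []. Qed.
Lemma EAS i d : Eprime_aux n r s e i d.+1 = br (s ^+ 2)^-1 (Eprime_aux n r s e i d) (e (n - d.+1)).
Proof. by []. Qed.

Lemma T6 i l d : (1 <= i < l)%N -> (l.+2 <= n - d)%N ->
  Eprime_aux n r s e i d * e l = e l * Eprime_aux n r s e i d.
Proof.
move=> H1; elim: d => [|d IH] H2.
  rewrite EA0; apply: comm_br; first by apply: T5; lia.
  apply: commE; lia.
rewrite EAS; apply: comm_br; first by apply: IH; lia.
apply: commE; lia.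
Qed.

Lemma T7 i j k d : (1 <= i < j)%N -> (j <= k)%N -> (k.+2 <= n - d)%N ->
  E j k * Eprime_aux n r s e i d = Eprime_aux n r s e i d * E j k.
Proof.
move=> H1 H2 H3; rewrite /Eroot; apply: Epos_comm => l Hl.
by apply/esym/T6; lia.
Qed.

Lemma L1 i j : (1 <= i)%N -> (i < j)%N -> (j < n)%N ->
  E i n * E j n - (r * s) *: (E j n * E i n) =
  E j n.-1 * br (r * s) (E i n) (e n) - r ^+ 2 *: (br (r * s) (E i n) (e n) * E j n.-1).
Proof.
move=> H1 H2 H3.
have hR2 : br (s ^+ 2) (E i n.-1) (E j n.-1) = 0 by apply: R2; lia.
have hR3 : br (s ^+ 2) (E j n.-1) (E j n) = 0 by apply: R1; lia.
have hZ : E i j.-1 * e n = e n * E i j.-1 by apply: E_commE; lia.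
rewrite (@ER_right j n) in hR3 *; [|lia|lia].
rewrite (@ER_right i n); [|lia|lia].
rewrite (@ER_split i j.-1 n.-1) in hR2 *; [|lia|lia].
rewrite prednK in hR2 *; last by lia.
move: hR2 hR3 hZ; set Z := E i j.-1; set Y := E j n.-1; set b := e n => hR2 hR3 hZ.
apply/eqP; rewrite -subr_eq0; apply/eqP.
apply: (@certL _ _ (r ^+ 2 + s ^+ 2) _
  (br (r ^+ 3 * s) (br (r ^+ 4) (br (s ^+ 2) (br (r ^+ 2) Z Y) Y) b) b
   - Z * br (r ^+ 3 * s) (br (s ^+ 2) Y (br (r ^+ 2) Y b)) b
   + r ^+ 4 *: (br (r ^+ 3 * s) (br (s ^+ 2) Y (br (r ^+ 2) Y b)) b * Z)) S2).
  nc [:: (Z, b)].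
by rewrite hR2 hR3; zsimp.
Qed.

Lemma L2 i j k : (1 <= i)%N -> (i < j)%N -> (j < k)%N -> (k < n.-1)%N ->
  E j k * Ep i k.+1 - r ^+ 2 *: (Ep i k.+1 * E j k) =
  Ep i k.+2 * E j k.+1 - (s ^+ 2)^-1 *: (E j k.+1 * Ep i k.+2).
Proof.
move=> H1 H2 H3 H4.
rewrite /Eprime (_ : (n - k.+1 = (n - k.+2).+1)%N); last by lia.
rewrite EAS (_ : (n - (n - k.+2).+1 = k.+1)%N); last by lia.
rewrite (@ER_right j k.+1) /=; [|lia|lia].
have hc := @T7 i j k (n - k.+2) ltac:(lia) ltac:(lia) ltac:(lia).
move: hc; set P := Eprime_aux n r s e i (n - k.+2); set Y := E j k => hc.
nc [:: (Y, P)].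
Qed.

Lemma L5 i : (1 <= i)%N -> (i < n.-1)%N ->
  br 1 (br (r * s) (E i n) (e n)) (E n.-1 n) = 0.
Proof.
move=> H1 H2.
have hW : br (s ^+ 2) (E i n.-1) (e n.-1) = 0 by apply: T4; lia.
have hE : br (s ^+ 2) (br (r * s) (E i n) (e n)) (e n) = 0 by apply: R4; lia.
have hL3 := L3.
have hA := SR3.
have hX : E i n.-1.-1 * e n = e n * E i n.-1.-1 by apply: E_commE; lia.
rewrite Eu in hL3 *.
rewrite (@ER_right i n) in hE *; [|lia|lia].
rewrite (@ER_right i n.-1) in hW hE *; [|lia|lia].
move: hW hE hL3 hA hX; set X := E i n.-1.-1; set a := e n.-1; set b := e n => hW hE hL3 hA hX.
have hK : (r ^+ 2 + r * s + s ^+ 2) * (r ^+ 2 + s ^+ 2) != 0 by rewrite mulf_neq0 // ?KS ?S2.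
apply: (@certL _ _ _ _
  (br (r ^+ 2 * s ^+ 2) (br (r ^+ 3 * s) (br (r ^+ 4) (br (s ^+ 2) (br (r ^+ 2) X a) a) b) b) b
   - (br (r ^+ 2) X a * br (s ^+ 2) (br (r * s) (br (r ^+ 2) a b) b) b
      + r ^+ 6 *: (br (s ^+ 2) (br (r * s) (br (r ^+ 2) (br (r ^+ 2) X a) b) b) b * a)
      - s ^+ 2 *: (a * br (s ^+ 2) (br (r * s) (br (r ^+ 2) (br (r ^+ 2) X a) b) b) b)
      - (r ^+ 6 * s ^+ 2) *: (br (s ^+ 2) (br (r * s) (br (r ^+ 2) a b) b) b * br (r ^+ 2) X a))
   - (r ^+ 2 + r * s + s ^+ 2) *: (X * br (s ^+ 2) (br (r ^+ 2) a b) (br (r * s) (br (r ^+ 2) a b) b))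
   + ((r ^+ 2 + r * s + s ^+ 2) * r ^+ 4) *:
       (br (s ^+ 2) (br (r ^+ 2) a b) (br (r * s) (br (r ^+ 2) a b) b) * X)) hK).
  nc [:: (X, b)].
by rewrite hW hE hL3 hA; zsimp.
Qed.

Lemma L6 i : (1 <= i)%N -> (i < n.-1)%N ->
  br (s ^+ 2) (br (r * s) (E i n) (e n)) (br (r * s) (E n.-1 n) (e n)) = 0.
Proof.
move=> H1 H2.
have h5 := L5 H1 H2.
have hE : br (s ^+ 2) (br (r * s) (E i n) (e n)) (e n) = 0 by apply: R4; lia.
move: h5 hE; set P := br (r * s) (E i n) (e n); set u := E n.-1 n; set b := e n => h5 hE.
apply: (@certL _ _ 1 _
  (br (r * s ^+ 3) (br 1 P u) b - (r * s) *: (br (s ^+ 2) P b * u) + u * br (s ^+ 2) P b)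
  (oner_neq0 _)).
  nc (@nil (A * A)).
by rewrite h5 hE; zsimp.
Qed.

Lemma L7 i : (1 <= i)%N -> (i < n.-1)%N ->
  br (s ^+ 2) (br (s ^+ 2)^-1 (br (r * s) (E i n) (e n)) (e n.-1)) (E n.-1 n) = 0.
Proof.
move=> H1 H2.
have h5 := L5 H1 H2.
have hS := SR1n; rewrite -Eu in hS.
move: h5 hS; set P := br (r * s) (E i n) (e n); set u := E n.-1 n; set a := e n.-1 => h5 hS.
apply: (@certL _ _ 1 _
  (s ^+ 2 *: (br 1 P u * a) + P * br (s ^+ 2) a u - (s ^+ 2)^-1 *: (br (s ^+ 2) a u * P)
   - (s ^+ 2)^-1 *: (a * br 1 P u)) (oner_neq0 _)).
  nc (@nil (A * A)).
by rewrite h5 hS; zsimp.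
Qed.

Lemma L8 i : (1 <= i)%N -> (i < n.-1)%N ->
  br ((r * s ^+ 2) ^+ 2) (br (s ^+ 2)^-1 (br (r * s) (E i n) (e n)) (e n.-1))
     (br (r * s) (E n.-1 n) (e n)) = 0.
Proof.
move=> H1 H2.
have h5 := L5 H1 H2.
have h6 := L6 H1 H2.
have hS := SR1n.
rewrite Eu in h5 h6 *.
move: h5 h6 hS; set P := br (r * s) (E i n) (e n); set a := e n.-1; set b := e n => h5 h6 hS.
apply: (@certL _ _ 1 _
  ((r ^+ 2 * s ^+ 2) *: (br (s ^+ 2) P (br (r * s) (br (r ^+ 2) a b) b) * a)
   + (s ^+ 2 - r * s) *: (br (r ^+ 2) a b * br 1 P (br (r ^+ 2) a b) + br 1 P (br (r ^+ 2) a b) * br (r ^+ 2) a b)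
   + P * br (r ^+ 3 * s) (br (s ^+ 2) a (br (r ^+ 2) a b)) b
   - br (r ^+ 3 * s) (br (s ^+ 2) a (br (r ^+ 2) a b)) b * P
   - (s ^+ 2)^-1 *: (a * br (s ^+ 2) P (br (r * s) (br (r ^+ 2) a b) b))) (oner_neq0 _)).
  nc (@nil (A * A)).
by rewrite h5 h6 hS; zsimp.
Qed.

Lemma L4 i d : (1 <= i)%N -> (i + d.+1 < n)%N ->
  br ((r * s) ^+ 2) (Eprime_aux n r s e i d.+1) (e n) = 0.
Proof.
move=> H1; elim: d => [|d IH] H2.
  have h5 : br 1 (br (r * s) (E i n) (e n)) (E n.-1 n) = 0 by apply: L5; lia.
  have hE : br (s ^+ 2) (br (r * s) (E i n) (e n)) (e n) = 0 by apply: R4; lia.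
  rewrite EAS EA0 subn1; rewrite Eu in h5.
  move: h5 hE; set P := br (r * s) (E i n) (e n); set a := e n.-1; set b := e n => h5 hE.
  apply: (@certL _ _ 1 _
    (br 1 P (br (r ^+ 2) a b) - (s ^+ 2)^-1 *: (a * br (s ^+ 2) P b)
     + r ^+ 2 *: (br (s ^+ 2) P b * a)) (oner_neq0 _)).
    nc (@nil (A * A)).
  by rewrite h5 hE; zsimp.
rewrite EAS -(mulr1 ((r * s) ^+ 2)); apply: br_qc; first by apply: IH; lia.
apply: brc1; apply: commE; lia.
Qed.

Lemma main_sec :
  let E := Eroot r e in
  let E' := Eprime n r s e in
      ((forall i j, (1 <= i)%N -> (i < j)%N -> (j < n)%N ->
         E i n * E j n - (r * s) *: (E j n * E i n) =
         E j n.-1 * E' i n - r ^+ 2 *: (E' i n * E j n.-1))) /\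
      ((forall i j k, (1 <= i)%N -> (i < j)%N -> (j < k)%N -> (k < n.-1)%N ->
         E j k * E' i k.+1 - r ^+ 2 *: (E' i k.+1 * E j k) =
         E' i k.+2 * E j k.+1 - (s ^+ 2)^-1 *: (E j k.+1 * E' i k.+2))) /\
      (E n.-1 n * E' n.-1 n = s ^+ 2 *: (E' n.-1 n * E n.-1 n)) /\
      ((forall i j, (1 <= i)%N -> (i < j)%N -> (j < n)%N ->
         E' i j * e n = (r * s) ^+ 2 *: (e n * E' i j))) /\
      ((forall i, (1 <= i)%N -> (i < n.-1)%N ->
         E' i n * E n.-1 n = E n.-1 n * E' i n)) /\
      ((forall i, (1 <= i)%N -> (i < n.-1)%N ->
         E' i n * E' n.-1 n = s ^+ 2 *: (E' n.-1 n * E' i n))) /\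
      ((forall i, (1 <= i)%N -> (i < n.-1)%N ->
         E' i n.-1 * E n.-1 n = s ^+ 2 *: (E n.-1 n * E' i n.-1))) /\
      (forall i, (1 <= i)%N -> (i < n.-1)%N ->
         E' i n.-1 * E' n.-1 n = (r * s ^+ 2) ^+ 2 *: (E' n.-1 n * E' i n.-1)).
Proof.
move=> E0 E'0; rewrite /E0 /E'0 {E0 E'0}.
have EPn i : Eprime n r s e i n = br (r * s) (E i n) (e n) by rewrite /Eprime subnn.
have EPn1 i : Eprime n r s e i n.-1 = br (s ^+ 2)^-1 (br (r * s) (E i n) (e n)) (e n.-1).
  by rewrite /Eprime (_ : (n - n.-1 = 1)%N) ?EAS ?subn1 //; lia.
split; first by move=> i j H1 H2 H3; rewrite EPn; apply: L1.
split; first by move=> i j k H1 H2 H3 H4; apply: L2.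
split; first by rewrite EPn; apply: br_eq; apply: L3.
split.
  move=> i j H1 H2 H3; rewrite /Eprime (_ : (n - j = (n - j).-1.+1)%N); last by lia.
  by apply: br_eq; apply: L4; lia.
split.
  by move=> i H1 H2; rewrite EPn; move/br_eq: (L5 H1 H2); rewrite scale1r.
split; first by move=> i H1 H2; rewrite !EPn; apply: br_eq; apply: L6.
split; first by move=> i H1 H2; rewrite EPn1; apply: br_eq; apply: L7.
by move=> i H1 H2; rewrite EPn1 EPn; apply: br_eq; apply: L8.
Qed.
End Main.

Unset Implicit Arguments.

Theorem lemma3p4 (F : fieldType) (A : unitAlgType F) (n : nat) (r s : F)
  (e f w w' : nat -> A) :
  [pchar F] =i pred0 ->
  r != 0 -> s != 0 -> r ^+ 3 != s ^+ 3 -> r ^+ 4 != s ^+ 4 ->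
  (2 <= n)%N ->
  Urs_relations n r s e f w w' ->
  let E := Eroot r e in
  let E' := Eprime n r s e in
  (* (1) *)
      ((forall i j, (1 <= i)%N -> (i < j)%N -> (j < n)%N ->
         E i n * E j n - (r * s) *: (E j n * E i n) =
         E j n.-1 * E' i n - r ^+ 2 *: (E' i n * E j n.-1))) /\
      (* (2) *)
      ((forall i j k, (1 <= i)%N -> (i < j)%N -> (j < k)%N -> (k < n.-1)%N ->
         E j k * E' i k.+1 - r ^+ 2 *: (E' i k.+1 * E j k) =
         E' i k.+2 * E j k.+1 - (s ^+ 2)^-1 *: (E j k.+1 * E' i k.+2))) /\
      (* (3) *)
      (E n.-1 n * E' n.-1 n = s ^+ 2 *: (E' n.-1 n * E n.-1 n)) /\
      (* (4) *)
      ((forall i j, (1 <= i)%N -> (i < j)%N -> (j < n)%N ->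
         E' i j * e n = (r * s) ^+ 2 *: (e n * E' i j))) /\
      (* (5) *)
      ((forall i, (1 <= i)%N -> (i < n.-1)%N ->
         E' i n * E n.-1 n = E n.-1 n * E' i n)) /\
      (* (6) *)
      ((forall i, (1 <= i)%N -> (i < n.-1)%N ->
         E' i n * E' n.-1 n = s ^+ 2 *: (E' n.-1 n * E' i n))) /\
      (* (7) *)
      ((forall i, (1 <= i)%N -> (i < n.-1)%N ->
         E' i n.-1 * E n.-1 n = s ^+ 2 *: (E n.-1 n * E' i n.-1))) /\
      (* (8) *)
      (forall i, (1 <= i)%N -> (i < n.-1)%N ->
         E' i n.-1 * E' n.-1 n = (r * s ^+ 2) ^+ 2 *: (E' n.-1 n * E' i n.-1)).
Proof.
move=> _ hr hs h3 h4 hn HU; exact: (main_sec hr hs h3 h4 hn HU).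
Qed.
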